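(* Let $\Sigma=(X,\mathcal{S},\phi)$ be a forward complete dynamical system and let $t_1>0$, $G_0>0$ be such that $$\|\phi(t,x,\sigma)\|\le G_0\|x\|\quad\text{for all } t\in[0,t_1],\ x\in X,\ \sigma\in\mathcal{S}.$$ Then the following statements are equivalent: (i) $\Sigma$ is UGES; (ii) for every $p>0$ there exists $k>0$ such that $\int_0^{+\infty}\|\phi(t,x,\sigma)\|^p\,dt\le k^p\|x\|^p$ for all $x\in X$, $\sigma\in\mathcal{S}$; (iii) there exist $p,k>0$ such that $\int_0^{+\infty}\|\phi(t,x,\sigma)\|^p\,dt\le k^p\|x\|^p$ for all $x\in X$, $\sigma\in\mathcal{S}$.
   Context: $(X,\|\cdot\|)$ is a Banach space. Let $\mathcal{Q}$ be a nonempty set and $\mathcal{S}$ a set of functions $\sigma:\mathbb{R}_+\to\mathcal{Q}$ which is closed by time-shift (for $\sigma\in\mathcal{S}$, $\tau\ge0$, the function $\mathbb{T}_\tau\sigma:s\mapsto\sigma(\tau+s)$ is in $\mathcal{S}$) and closed by concatenation (for $\sigma_1,\sigma_2\in\mathcal{S}$, $\tau>0$, the function equal to $\sigma_1$ on $[0,\tau]$ and with $\sigma(\tau+t)=\sigma_2(t)$ for $t>0$ is in $\mathcal{S}$). A triple $\Sigma=(X,\mathcal{S},\phi)$ with $\phi:\mathbb{R}_+\times X\times\mathcal{S}\to X$ is a forward complete dynamical system if: (i) $\phi(0,x,\sigma)=x$; (ii) if $\tilde\sigma=\sigma$ on $[0,t]$ then $\phi(t,x,\tilde\sigma)=\phi(t,x,\sigma)$;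 (iii) $t\mapsto\phi(t,x,\sigma)$ is continuous; (iv) $\phi(\tau,\phi(t,x,\sigma),\mathbb{T}_t\sigma)=\phi(t+\tau,x,\sigma)$ for all $t,\tau\ge0$, $x\in X$, $\sigma\in\mathcal{S}$. $\Sigma$ is uniformly globally exponentially stable at the origin (UGES) if there exist $M,\lambda>0$ such that $\|\phi(t,x,\sigma)\|\le Me^{-\lambda t}\|x\|$ for all $t\ge0$, $x\in X$, $\sigma\in\mathcal{S}$. *)

(* Defs.v *)
From HB Require Import structures.
From mathcomp Require Import all_boot all_order all_algebra.
From mathcomp Require Import all_classical all_reals all_analysis.
Set Implicit Arguments. Unset Strict Implicit. Unset Printing Implicit Defensive.
Import Order.TTheory GRing.Theory Num.Theory.
Import numFieldNormedType.Exports.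
Local Open Scope classical_set_scope.
Local Open Scope ring_scope.

(* Switching signals sigma : R_+ -> Q are represented as functions R -> Q;
   only their values on [0, +oo) are ever used. *)
Definition tshift {R : realType} {Q : Type} (tau : R) (s : R -> Q) : R -> Q :=
  fun t => s (tau + t).

Definition tconcat {R : realType} {Q : Type} (s1 s2 : R -> Q) (tau : R) : R -> Q :=
  fun t => if t <= tau then s1 t else s2 (t - tau).

Definition shift_closed {R : realType} {Q : Type} (S : set (R -> Q)) : Prop :=
  forall s tau, S s -> 0 <= tau -> S (tshift tau s).

Definition concat_closed {R : realType} {Q : Type} (S : set (R -> Q)) : Prop :=
  forall s1 s2 tau, S s1 -> S s2 -> 0 < tau -> S (tconcat s1 s2 tau).

Definition forward_complete_dynsys {R : realType} {Q : Type}
  {X : completeNormedModType R} (S : set (R -> Q)) (phi : R -> X -> (R -> Q) -> X) : Prop :=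
  [/\ (forall x s, S s -> phi 0 x s = x),
      (forall t x s s', 0 <= t -> S s -> S s' ->
          (forall u, 0 <= u <= t -> s' u = s u) -> phi t x s' = phi t x s),
      (forall x s, S s -> {within `[0, +oo[, continuous (fun t => phi t x s)}) &
      (forall t tau x s, 0 <= t -> 0 <= tau -> S s ->
          phi tau (phi t x s) (tshift t s) = phi (t + tau) x s)].

Definition UGES {R : realType} {Q : Type}
  {X : completeNormedModType R} (S : set (R -> Q)) (phi : R -> X -> (R -> Q) -> X) : Prop :=
  exists M lam : R, [/\ 0 < M, 0 < lam &
    forall t x s, 0 <= t -> S s -> `|phi t x s| <= M * expR (- lam * t) * `|x| ].

Definition Lp_bound {R : realType} {Q : Type}
  {X : completeNormedModType R} (S : set (R -> Q)) (phi : R -> X -> (R -> Q) -> X)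
  (p k : R) : Prop :=
  forall x s, S s ->
    (\int[lebesgue_measure]_(t in `[0%R, +oo[%classic) ((`|phi t x s| `^ p)%:E)
      <= ((k `^ p * `|x| `^ p)%:E))%E.

(* Main.v *)
Require Import Defs.
From HB Require Import structures.
From mathcomp Require Import all_boot all_order all_algebra.
From mathcomp Require Import all_classical all_reals all_analysis.
From mathcomp Require Import measurable_realfun exponential_distribution.
From mathcomp Require Import ring lra.
Import Order.TTheory GRing.Theory Num.Theory.
Import numFieldNormedType.Exports.
Local Open Scope classical_set_scope.
Local Open Scope ring_scope.

Lemma meas_phi (R : realType) (X : completeNormedModType R) (f : R -> X) (p : R) :
  {within `[0, +oo[, continuous f} ->
  measurable_fun (`[0%R, +oo[%classic : set R) (fun t : R => (`|f t| `^ p)%:E).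
Proof.
move=> cf.
apply/(measurable_EFinP _ (fun t => `|f t| `^ p)).
have mn : measurable_fun (`[0%R, +oo[%classic : set R) (fun t : R => `|f t|).
  apply: subspace_continuous_measurable_fun => //.
  move=> x; apply: continuous_comp; first exact: cf.
  exact: norm_continuous.
exact: (measurableT_comp (measurable_powR p) mn).
Qed.

Lemma int_lb (R : realType) (X : completeNormedModType R) (f : R -> X) (p K a b c : R) :
  {within `[0, +oo[, continuous f} ->
  (\int[lebesgue_measure]_(t in `[0%R, +oo[%classic) ((`|f t| `^ p)%:E) <= K%:E)%E ->
  0 <= a -> a <= b -> 0 <= c -> (forall t, a <= t <= b -> c <= `|f t| `^ p) ->
  (b - a) * c <= K.
Proof.
move=> cf hK a0 ab c0 hc.
have mf := @meas_phi R X f p cf.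
have sub : (`[a, b]%classic : set R) `<=` `[0%R, +oo[%classic.
  move=> t /=; rewrite !in_itv /= andbT => /andP[at_ _].
  exact: le_trans at_.
rewrite -lee_fin; apply: le_trans hK.
have mab : measurable (`[a, b]%classic : set R) by [].
apply: (@le_trans _ _ (\int[lebesgue_measure]_(t in `[a, b]%classic) ((`|f t| `^ p)%:E))%E); last first.
  apply: ge0_subset_integral => //.
apply: (@le_trans _ _ (\int[lebesgue_measure]_(t in `[a, b]%classic) (cst c%:E) t)%E).
  have hm : (lebesgue_measure (`[a, b]%classic : set R) = (b - a)%:E)%E.
    rewrite lebesgue_measure_itv /= lte_fin.
    case: ltP => h; first by rewrite EFinB.
    have -> : b = a by apply/eqP; rewrite eq_le ab h.
    by rewrite subrr.
  rewrite integral_cst //.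
  set m := (X in (_ <= _ * X)%E).
  have -> : m = (b - a)%:E by exact: hm.
  by rewrite -EFinM mulrC.
apply: ge0_le_integral => //.
exact: (measurable_funS _ sub mf).
Qed.

Lemma powR_le_inv (R : realType) (u v p : R) :
  0 <= u -> 0 <= v -> 0 < p -> u `^ p <= v `^ p -> u <= v.
Proof.
move=> u0 v0 p0 h; rewrite leNgt; apply/negP => vu.
have := gt0_ltr_powR p0 (x:=v) (y:=u); rewrite !nnegrE => /(_ v0 u0 vu).
by rewrite ltNge h.
Qed.

Lemma le_pow (R : realType) (u v p : R) :
  0 <= u -> u <= v -> 0 <= p -> u `^ p <= v `^ p.
Proof.
move=> u0 uv p0; apply: (ge0_ler_powR p0) => //; rewrite nnegrE //.
exact: le_trans uv.
Qed.

Lemma root_pow (R : realType) (a p : R) : 0 <= a -> 0 < p -> (a `^ p^-1) `^ p = a.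
Proof. by move=> a0 p0; rewrite -powRrM mulVf ?gt_eqF // powRr1. Qed.

Lemma dir31 (R : realType) (Q : Type) (X : completeNormedModType R)
  (S : set (R -> Q)) (phi : R -> X -> (R -> Q) -> X)
  (hshift : shift_closed S) (hsys : forward_complete_dynsys S phi)
  (t1 G0 : R) (ht1 : 0 < t1) (hG0 : 0 < G0)
  (hbound : forall t x s, 0 <= t <= t1 -> S s -> `|phi t x s| <= G0 * `|x|)
  (p k : R) (p0 : 0 < p) (k0 : 0 < k) (hL : Lp_bound S phi p k) : UGES S phi.
Proof.
case: hsys => h0 _ hc hcoc.
have key : forall x s a b c, S s -> 0 <= a -> a <= b -> 0 <= c ->
    (forall t, a <= t <= b -> c <= `|phi t x s| `^ p) ->
    (b - a) * c <= k `^ p * `|x| `^ p.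
  move=> x s a b c Ss a0 ab c0 hcb.
  exact: (@int_lb R X (fun t => phi t x s) p _ a b c (hc x s Ss) (hL x s Ss)).

have split_phi : forall x s t tau, S s -> 0 <= tau -> tau <= t ->
    phi t x s = phi (t - tau) (phi tau x s) (tshift tau s).
  move=> x s t tau Ss tau0 taut.
  rewrite (hcoc tau (t - tau) x s) //; first by rewrite addrC subrK.
  by rewrite subr_ge0.
have G0p : 0 < G0 `^ p by apply: powR_gt0.
have kp : 0 < k `^ p by apply: powR_gt0.
pose Cp := G0 `^ p * k `^ p / t1.
have Cp0 : 0 <= Cp by rewrite /Cp ltW // divr_gt0 // mulr_gt0.
pose C := G0 + Cp `^ p^-1.
have C0 : 0 < C by rewrite /C ltr_wpDr // powR_ge0.
have hC : forall t x s, 0 <= t -> S s -> `|phi t x s| <= C * `|x|.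
  move=> t x s t0 Ss; case: (leP t t1) => tt1.
    apply: le_trans (hbound t x s _ Ss) _; first by rewrite t0 tt1.
    by rewrite ler_wpM2r // /C lerDl powR_ge0.
  have pt : forall tau, t - t1 <= tau <= t ->
      `|phi t x s| <= G0 * `|phi tau x s|.
    move=> tau /andP[h1 h2].
    have tau0 : 0 <= tau by lra.
    rewrite (split_phi x s t tau Ss tau0 h2).
    apply: hbound; last exact: hshift.
    apply/andP; split; lra.
  have h : t1 * (`|phi t x s| `^ p / G0 `^ p) <= k `^ p * `|x| `^ p.
    have := key x s (t - t1) t (`|phi t x s| `^ p / G0 `^ p) Ss.
    have -> : t - (t - t1) = t1 by ring.
    apply; first lra; first lra.
      by rewrite divr_ge0 // ?powR_ge0 // ltW.
    move=> tau htau; rewrite ler_pdivrMr // mulrC -powRM //; last exact: ltW.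
    by apply: le_pow => //; [exact: pt | exact: ltW].
  have h2 : `|phi t x s| `^ p <= Cp * `|x| `^ p.
    have -> : `|phi t x s| `^ p = (t1 * (`|phi t x s| `^ p / G0 `^ p)) * (G0 `^ p / t1).
      by field; rewrite !gt_eqF.
    apply: le_trans (ler_wpM2r _ h) _; first by rewrite divr_ge0 // ltW.
    by rewrite /Cp le_eqVlt; apply/orP; left; apply/eqP; ring.
  apply: (@le_trans _ _ (Cp `^ p^-1 * `|x|)).
    apply: (@powR_le_inv R _ _ p _ _ p0) => //.
      exact: (@mulr_ge0 R _ _ (powR_ge0 _ _) (normr_ge0 _)).
    by rewrite powRM // ?powR_ge0 // (@root_pow R Cp p Cp0 p0).
  by rewrite ler_wpM2r // /C lerDr ltW.
pose T := 2 `^ p * C `^ p * k `^ p.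
have T0 : 0 < T by rewrite /T !mulr_gt0 // powR_gt0.
have hT : forall x s, S s -> 2 * `|phi T x s| <= `|x|.
  move=> x s Ss.
  have pt : forall tau, 0 <= tau <= T -> `|phi T x s| <= C * `|phi tau x s|.
    move=> tau /andP[h1 h2].
    rewrite (split_phi x s T tau Ss h1 h2).
    by apply: hC; [rewrite subr_ge0 | exact: hshift].
  have Cp' : 0 < C `^ p by apply: powR_gt0.
  have h : T * (`|phi T x s| `^ p / C `^ p) <= k `^ p * `|x| `^ p.
    have := key x s 0 T (`|phi T x s| `^ p / C `^ p) Ss (lexx 0) (ltW T0).
    rewrite subr0; apply.
      by rewrite divr_ge0 // ?powR_ge0 // ltW.
    move=> tau htau; rewrite ler_pdivrMr // mulrC -powRM //; last exact: ltW.
    by apply: le_pow => //; [exact: pt | exact: ltW].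
  have h2 : k `^ p * (2 * `|phi T x s|) `^ p <= k `^ p * `|x| `^ p.
    apply: le_trans h; rewrite le_eqVlt; apply/orP; left; apply/eqP.
    rewrite powRM //; rewrite /T; field; by rewrite gt_eqF.
  rewrite ler_pM2l // in h2.
  apply: (@powR_le_inv R _ _ p _ _ p0 h2) => //.
pose lam := ln 2 / T.
have lam0 : 0 < lam by rewrite /lam divr_gt0 // ln_gt0 // ltr1n.
have e2 : expR (lam * T) = 2.
  by rewrite /lam divfK ?gt_eqF // lnK // posrE.
have base : forall t x s, 0 <= t <= T -> S s ->
    `|phi t x s| <= 2 * C * expR (- lam * t) * `|x|.
  move=> t x s /andP[t0 tT] Ss.
  apply: le_trans (hC t x s t0 Ss) _.
  rewrite ler_wpM2r // (mulrC 2) -mulrA ler_pMr // -e2 -expRD.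
  apply: le_trans (expR_ge1Dx _); rewrite lerDl.
  rewrite mulNr subr_ge0 ler_pM2l //.
have ind : forall n : nat, forall t x s, 0 <= t <= n.+1%:R * T -> S s ->
    `|phi t x s| <= 2 * C * expR (- lam * t) * `|x|.
  elim=> [|n IH] t x s /andP[t0 tn] Ss.
    by apply: base => //; rewrite t0 -[T]mul1r.
  case: (leP t T) => tT; first by apply: base => //; rewrite t0.
  rewrite (split_phi x s t T Ss (ltW T0) (ltW tT)).
  apply: le_trans (IH (t - T) (phi T x s) (tshift T s) _ (hshift _ _ Ss (ltW T0))) _.
    move: tn; rewrite -addn1 natrD mulrDl mul1r.
    set u := n.+1%:R * T => tn.
    apply/andP; split; lra.
  have -> : - lam * (t - T) = - lam * t + lam * T by ring.
  rewrite expRD e2 -!mulrA ler_pM2l // ler_pM2l ?expR_gt0 //.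
  by apply: ler_wpM2l; [exact: ltW (expR_gt0 _) | exact: hT].
exists (2 * C), lam; split => //; first by rewrite mulr_gt0.
move=> t x s t0 Ss; apply: (ind (Num.truncn (t / T))) => //.
rewrite t0 /=; rewrite -ler_pdivrMr //; apply: ltW; exact: truncnS_gt.
Qed.

Lemma dir12 (R : realType) (Q : Type) (X : completeNormedModType R)
  (S : set (R -> Q)) (phi : R -> X -> (R -> Q) -> X)
  (hsys : forward_complete_dynsys S phi) :
  UGES S phi -> forall p : R, 0 < p -> exists k : R, 0 < k /\ Lp_bound S phi p k.
Proof.
case: hsys => _ _ hc _.
move=> [M [lam [M0 lam0 hM]]] p p0.
pose r := p * lam.
have r0 : 0 < r by rewrite mulr_gt0.
pose c := M `^ p / r.
have c0 : 0 < c by rewrite divr_gt0 // powR_gt0.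
exists (c `^ p^-1); split; first exact: powR_gt0.
move=> x s Ss; rewrite (@root_pow R c p (ltW c0) p0).
have mf := @meas_phi R X (fun t => phi t x s) p (hc x s Ss).
have mpdf : measurable_fun (`[0%R, +oo[%classic : set R)
    (fun t : R => (exponential_pdf r t)%:E).
  apply/(measurable_EFinP _ (exponential_pdf r)).
  exact: measurable_funTS (measurable_exponential_pdf r).
have cx0 : 0 <= c * `|x| `^ p by apply: (@mulr_ge0 R); [exact: ltW | exact: powR_ge0].
apply: (@le_trans _ _ (\int[lebesgue_measure]_(t in `[0%R, +oo[%classic)
    ((c * `|x| `^ p)%:E * (exponential_pdf r t)%:E))%E).
  apply: ge0_le_integral => //.
  - exact: measurable_funeM mpdf.
  - move=> t; rewrite /= in_itv /= andbT => t0.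
    rewrite -EFinM lee_fin exponential_pdfE //.
    apply: le_trans (@le_pow R _ _ p (normr_ge0 _) (hM t x s t0 Ss) (ltW p0)) _.
    rewrite !powRM // ?mulr_ge0 // ?expR_ge0 //; try exact: ltW.
    rewrite -expRM.
    have -> : - lam * t * p = - r * t by rewrite /r; ring.
    rewrite le_eqVlt; apply/orP; left; apply/eqP.
    rewrite /c; field; by rewrite gt_eqF.
rewrite ge0_integralZl //; last by move=> t _; rewrite lee_fin exponential_pdf_ge0 // ltW.
rewrite -[X in (_ <= X)%E]mule1.
apply: lee_wpmul2l; first by rewrite lee_fin.
rewrite -(integral_exponential_pdf r0).
apply: ge0_subset_integral => //.
- apply/(measurable_EFinP _ (exponential_pdf r)).
  exact: measurable_exponential_pdf r.
- by move=> t _; rewrite lee_fin exponential_pdf_ge0 // ltW.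
Qed.

Theorem theorem3 (R : realType) (Q : Type) (X : completeNormedModType R)
  (S : set (R -> Q)) (phi : R -> X -> (R -> Q) -> X)
  (hQ : inhabited Q) (hshift : shift_closed S) (hconcat : concat_closed S)
  (hsys : forward_complete_dynsys S phi)
  (t1 G0 : R) (ht1 : 0 < t1) (hG0 : 0 < G0)
  (hbound : forall t x s, 0 <= t <= t1 -> S s -> `|phi t x s| <= G0 * `|x|) :
  [<-> UGES S phi;
       (forall p : R, 0 < p -> exists k : R, 0 < k /\ Lp_bound S phi p k);
       (exists p k : R, [/\ 0 < p, 0 < k & Lp_bound S phi p k])].
Proof.
split; first exact: dir12.
split.
  move=> h; have [k [k0 hk]] := h 1 ltr01.
  by exists 1, k; split => //; exact: ltr01.
move=> [p [k [p0 k0 hL]]].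
exact: (@dir31 R Q X S phi hshift hsys t1 G0 ht1 hG0 hbound p k p0 k0 hL).
Qed.
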